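(* For every integer $n\ge 3$, let $\beta_1,\dots,\beta_n$ be the eigenvalues of $L_S$ (all positive). Then $$\sum_{i=1}^{n}\frac{1}{\beta_{i}}=\frac{n}{2\sqrt{3}}\cdot\frac{p^{n}-q^{n}}{p^{n}+q^{n}+2}.$$
   Context: $p=2+\sqrt3$, $q=2-\sqrt3$. $L_S$ denotes the $n\times n$ matrix with all diagonal entries equal to $4$, entries $(i,i+1)$ and $(i+1,i)$ equal to $-1$ for $1\le i\le n-1$, entries $(1,n)$ and $(n,1)$ equal to $+1$, and all other entries $0$. *)

(* Defs.v *)
From HB Require Import structures.
From mathcomp Require Import all_boot all_order all_algebra.
From mathcomp Require Import reals.
Set Implicit Arguments. Unset Strict Implicit. Unset Printing Implicit Defensive.
Import Order.TTheory GRing.Theory Num.Theory.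
Local Open Scope ring_scope.

Definition pp (R : realType) : R := 2 + Num.sqrt 3.
Definition qq (R : realType) : R := 2 - Num.sqrt 3.

(* L_S : n x n, indices 0..n-1 (paper's i corresponds to i-1 here).
   diagonal 4; (i,i+1),(i+1,i) = -1; (first,last),(last,first) = +1; else 0. *)
Definition L_S (R : realType) (n : nat) : 'M[R]_n :=
  \matrix_(i < n, j < n)
    if i == j then 4
    else if (i.+1 == j :> nat) || (j.+1 == i :> nat) then -1
    else if ((i == 0 :> nat) && (j == n.-1 :> nat)) ||
            ((j == 0 :> nat) && (i == n.-1 :> nat)) then 1
    else 0.

(* Main.v *)
Require Import Defs.
From HB Require Import structures.
From mathcomp Require Import all_boot all_order all_algebra.
From mathcomp Require Import reals.
From mathcomp Require Import zify ring lra.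
From mathcomp Require Import spectral sesquilinear complex.
Import Order.TTheory GRing.Theory Num.Theory.
Local Open Scope ring_scope.

Definition nx (n i : nat) : nat := if i == n.-1 then 0%N else i.+1.
Definition pv (n i : nat) : nat := if i == 0%N then n.-1 else i.-1.
Definition sgx (R : realType) (n i : nat) : R := if i == n.-1 then -1 else 1.
Definition sgp (R : realType) (n i : nat) : R := if i == 0%N then -1 else 1.

Lemma nx_lt n i : (i < n)%N -> (nx n i < n)%N.
Proof. rewrite /nx; case: eqP; lia. Qed.
Lemma pv_lt n i : (i < n)%N -> (pv n i < n)%N.
Proof. rewrite /pv; case: eqP; lia. Qed.
Arguments nx_lt {n i}.
Arguments pv_lt {n i}.

Lemma LSE (R : realType) n (hn : (3 <= n)%N) (i k : 'I_n) :
  L_S R n i k = 4 * (i == k)%:R - (if (k:nat) == nx n i then sgx R n i else 0)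
     - (if (k:nat) == pv n i then sgp R n i else 0).
Proof.
rewrite mxE /nx /pv /sgx /sgp -val_eqE /=.
move: (ltn_ord i) (ltn_ord k); move: (i : nat) (k : nat) => a b ha hb.
case: (a =P n.-1) => ?; case: (a =P 0%N) => ?;
repeat match goal with |- context [?x == ?y] => case: (@eqP nat x y) => ? end;
  rewrite /=; try lia; lra.
Qed.

Lemma LS_sym (R : realType) n (i k : 'I_n) : L_S R n i k = L_S R n k i.
Proof.
rewrite !mxE eq_sym; case: eqP => // _.
by rewrite (orbC (k.+1 == i :> nat)) (orbC (((k:nat) == 0%N) && _)).
Qed.

Lemma sum_pick (R : realType) n (f : 'I_n -> R) m (hm : (m < n)%N) (c : R) :
  \sum_(k < n) (if (k:nat) == m then c else 0) * f k = c * f (Ordinal hm).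
Proof.
rewrite (bigD1 (Ordinal hm)) //= eqxx big1 ?addr0 // => k hk.
case: eqP => [e|]; last by rewrite mul0r.
by exfalso; move/negP: hk; apply; apply/eqP/val_inj.
Qed.

Lemma LS_row (R : realType) n (hn : (3 <= n)%N) (i : 'I_n) (f : 'I_n -> R) :
  \sum_(k < n) L_S R n i k * f k =
  4 * f i - sgx R n i * f (Ordinal (nx_lt (ltn_ord i)))
          - sgp R n i * f (Ordinal (pv_lt (ltn_ord i))).
Proof.
under eq_bigr => k _ do rewrite LSE // !mulrBl.
rewrite !sumrB -!sum_pick; congr (_ - _ - _).
rewrite (bigD1 i) //= eqxx big1 ?addr0 ?mulr1 //.
by move=> k hk; rewrite eq_sym (negbTE hk) mulr0 mul0r.
Qed.

Lemma norm_sgx (R : realType) n i : `|sgx R n i| = 1.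
Proof. by rewrite /sgx; case: ifP; rewrite ?normrN normr1. Qed.
Lemma norm_sgp (R : realType) n i : `|sgp R n i| = 1.
Proof. by rewrite /sgp; case: ifP; rewrite ?normrN normr1. Qed.

Lemma LS_eig_ge2 (R : realType) n (hn : (3 <= n)%N) (b : R) :
  root (char_poly (L_S R n)) b -> 2 <= b.
Proof.
rewrite -eigenvalue_root_char => /eigenvalueP [v hv vn0].
have n0 : (0 < n)%N by lia.
pose F k := `|v 0 k|.
have [i _ imax] := @real_arg_maxP R _ (Ordinal n0) xpredT F erefl
   (fun _ _ => normr_real _).
have Fi : 0 < F i.
  have [k hk] : exists k, v 0 k != 0.
    apply/existsP; move: vn0; apply: contraR => /existsPn h.
    by apply/eqP/rowP => k; rewrite mxE; apply/eqP; move: (h k); rewrite negbK.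
  by apply: lt_le_trans (imax k erefl); rewrite /F normr_gt0.
move/rowP: hv => /(_ i); rewrite !mxE.
under eq_bigr => k _ do rewrite LS_sym mulrC.
rewrite LS_row // => e.
have e2 : (4 - b) * v 0 i = sgx R n i * v 0 (Ordinal (nx_lt (ltn_ord i)))
   + sgp R n i * v 0 (Ordinal (pv_lt (ltn_ord i))) by rewrite mulrBl -e; ring.
have : `|4 - b| * F i <= 2 * F i.
  rewrite /F -normrM e2; apply: le_trans (ler_normD _ _) _.
  rewrite !normrM norm_sgx norm_sgp !mul1r.
  have h3 := imax (Ordinal (nx_lt (ltn_ord i))) erefl.
  have h4 := imax (Ordinal (pv_lt (ltn_ord i))) erefl.
  rewrite /F /= in h3 h4 *.
  by apply: le_trans (lerD h3 h4) _; rewrite mulr_natl mulr2n.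
rewrite ler_pM2r // => /ler_normlP [h1 h2]; lra.
Qed.

Definition dist (a b : nat) : nat := if (a <= b)%N then (b - a)%N else (a - b)%N.
Definition EE {R : realType} (p : R) (n k : nat) : R := p ^+ k - p ^+ (n - k).

Section Inv.
Variables (R : realType) (p : R) (hp : p ^+ 2 = 4 * p - 1) (n : nat) (hn : (3 <= n)%N).

Lemma Erec k : (0 < k < n)%N -> 4 * EE p n k - EE p n k.-1 - EE p n k.+1 = 0.
Proof.
move=> /andP [h1 h2].
have [k' ek] : exists k', k = k'.+1 by exists (k - 1)%N; lia.
subst k.
have [m em] : exists m, n = (k'.+1 + m.+1)%N by exists (n - k'.+2)%N; lia.
rewrite em /EE /=.
have -> : (k'.+1 + m.+1 - k'.+1 = m.+1)%N by lia.
have -> : (k'.+1 + m.+1 - k'.+2 = m)%N by lia.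
have -> : (k'.+1 + m.+1 - k' = m.+2)%N by lia.
apply/eqP; rewrite -subr_eq0.
have -> : 4 * (p ^+ k'.+1 - p ^+ m.+1) - (p ^+ k' - p ^+ m.+2) - (p ^+ k'.+2 - p ^+ m) - 0
   = (p ^+ m - p ^+ k') * (p ^+ 2 - (4 * p - 1)) by rewrite !exprS; ring.
by rewrite hp subrr mulr0.
Qed.

Lemma Esym k : (k <= n)%N -> EE p n (n - k) = - EE p n k.
Proof. by move=> h; rewrite /EE subKn //; ring. Qed.

Definition KK := - (2 * p - 4) * (1 + p ^+ n).

Lemma E01 : 4 * EE p n 0 - 2 * EE p n 1 = KK.
Proof.
rewrite /KK /EE.
have [m ->] : exists m, n = m.+1 by exists (n - 1)%N; lia.
rewrite subn0 subn1 /=.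
apply/eqP; rewrite -subr_eq0.
have -> : 4 * (p ^+ 0 - p ^+ m.+1) - 2 * (p ^+ 1 - p ^+ m) - - (2 * p - 4) * (1 + p ^+ m.+1)
   = 2 * p ^+ m * (p ^+ 2 - (4 * p - 1)) by rewrite !exprS; ring.
by rewrite hp subrr mulr0.
Qed.

Ltac dtac := rewrite /dist /nx /pv; repeat match goal with
  |- context [?x == ?y] => case: (@eqP nat x y) => ? end; rewrite /=;
  repeat match goal with
  |- context [if ?b then _ else _] => case: (boolP b) => ? end; lia.

Lemma entry (i j : nat) : (i < n)%N -> (j < n)%N ->
  4 * EE p n (dist i j) - sgx R n i * EE p n (dist (nx n i) j)
    - sgp R n i * EE p n (dist (pv n i) j) = (i == j)%:R * KK.
Proof.
move=> hi hj.
have sgx1 : i != n.-1 -> sgx R n i = 1 by move=> h; rewrite /sgx (negbTE h).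
have sgx2 : i = n.-1 -> sgx R n i = -1 by move=> ->; rewrite /sgx eqxx.
have sgp1 : i != 0%N -> sgp R n i = 1 by move=> h; rewrite /sgp (negbTE h).
have sgp2 : i = 0%N -> sgp R n i = -1 by move=> ->; rewrite /sgp eqxx.
have En1 : EE p n (n - 1) = - EE p n 1 by apply: Esym; lia.
case: (eqVneq i j) => [<-|hij].
  rewrite mul1r -E01.
  have -> : dist i i = 0%N by dtac.
  case: (eqVneq i 0%N) => [i0|i0].
    rewrite sgx1 ?sgp2 //; last by apply/eqP; lia.
    have -> : dist (nx n i) i = 1%N by dtac.
    have -> : dist (pv n i) i = (n - 1)%N by dtac.
    rewrite En1; ring.
  case: (eqVneq i n.-1) => [i1|i1].
    rewrite sgx2 ?sgp1 //.
    have -> : dist (nx n i) i = (n - 1)%N by dtac.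
    have -> : dist (pv n i) i = 1%N by dtac.
    rewrite En1; ring.
  rewrite sgx1 ?sgp1 //.
  have -> : dist (nx n i) i = 1%N by dtac.
  have -> : dist (pv n i) i = 1%N by dtac.
  ring.
rewrite mul0r.
have hk : (0 < dist i j < n)%N by move: hij; dtac.
have Ek := Erec (dist i j) hk.
have Es : EE p n (n - (dist i j).+1) = - EE p n (dist i j).+1 by apply: Esym; lia.
case: (eqVneq i 0%N) => [i0|i0].
  rewrite sgx1 ?sgp2 //; last by apply/eqP; lia.
  have -> : dist (nx n i) j = (dist i j).-1 by move: hij; dtac.
  have -> : dist (pv n i) j = (n - (dist i j).+1)%N by move: hij; dtac.
  rewrite Es -Ek; ring.
case: (eqVneq i n.-1) => [i1|i1].
  rewrite sgx2 ?sgp1 //.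
  have -> : dist (nx n i) j = (n - (dist i j).+1)%N by move: hij; dtac.
  have -> : dist (pv n i) j = (dist i j).-1 by move: hij; dtac.
  rewrite Es -Ek; ring.
rewrite sgx1 ?sgp1 //.
case: (ltnP i j) => hlt.
  have -> : dist (nx n i) j = (dist i j).-1 by move: hij; dtac.
  have -> : dist (pv n i) j = (dist i j).+1 by move: hij; dtac.
  rewrite -Ek; ring.
have -> : dist (nx n i) j = (dist i j).+1 by move: hij; dtac.
have -> : dist (pv n i) j = (dist i j).-1 by move: hij; dtac.
rewrite -Ek; ring.
Qed.

End Inv.
Arguments KK {R}.
Arguments entry {R p}.
Arguments Erec {R p}.

Lemma sqrt3_2 (R : realType) : Num.sqrt (3 : R) ^+ 2 = 3.
Proof. by rewrite sqr_sqrtr. Qed.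
Lemma sqrt3_gt0 (R : realType) : 0 < Num.sqrt (3 : R).
Proof. by rewrite sqrtr_gt0. Qed.

Lemma pp2 (R : realType) : pp R ^+ 2 = 4 * pp R - 1.
Proof.
rewrite /pp; have h := sqrt3_2 R.
apply/eqP; rewrite -subr_eq0.
have -> : (2 + Num.sqrt 3) ^+ 2 - (4 * (2 + Num.sqrt 3) - 1) = Num.sqrt (3:R) ^+ 2 - 3 by ring.
by rewrite h subrr.
Qed.

Lemma pp_gt0 (R : realType) : 0 < pp R.
Proof. rewrite /pp; have := sqrt3_gt0 R; lra. Qed.

Lemma KK_neq0 (R : realType) n : KK (pp R) n != 0.
Proof.
rewrite /KK /pp mulf_neq0 //.
  have := sqrt3_gt0 R; rewrite oppr_eq0; apply: contraTneq => h; rewrite -leNgt; lra.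
have := exprn_gt0 n (pp_gt0 R); rewrite /pp; apply: contraTneq => h.
rewrite -leNgt; lra.
Qed.

Definition XX (R : realType) n : 'M[R]_n :=
  \matrix_(i < n, j < n) ((KK (pp R) n)^-1 * EE (pp R) n (dist i j)).

Lemma LX (R : realType) n (hn : (3 <= n)%N) : L_S R n *m XX R n = 1%:M.
Proof.
apply/matrixP => i j; rewrite !mxE.
rewrite (@LS_row R n hn i (fun k => XX R n k j)) !mxE.
have := entry (pp2 R) n hn _ _ (ltn_ord i) (ltn_ord j).
rewrite val_eqE => e.
have hK := KK_neq0 R n.
apply: (mulfI hK).
rewrite /= [RHS]mulrC -e.
have hKK : KK (pp R) n * (KK (pp R) n)^-1 = 1 by apply: divff.
by rewrite -[RHS]mul1r -hKK; ring.
Qed.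

Lemma trXX (R : realType) n : \tr (XX R n) = n%:R * ((KK (pp R) n)^-1 * (1 - pp R ^+ n)).
Proof.
rewrite /mxtrace (eq_bigr (fun _ => (KK (pp R) n)^-1 * (1 - pp R ^+ n))).
  by rewrite sumr_const card_ord mulr_natl.
by move=> i _; rewrite mxE /EE /dist leqnn subnn subn0 expr0.
Qed.

Lemma final_arith (R : realType) n :
  n%:R * ((KK (pp R) n)^-1 * (1 - pp R ^+ n)) =
  n%:R / (2 * Num.sqrt 3) * ((pp R ^+ n - qq R ^+ n) / (pp R ^+ n + qq R ^+ n + 2)).
Proof.
have hs := sqrt3_gt0 R; have h3 := sqrt3_2 R.
have hpq : pp R * qq R = 1.
  rewrite /pp /qq; apply/eqP; rewrite -subr_eq0.
  have -> : (2 + Num.sqrt 3) * (2 - Num.sqrt 3) - 1 = 3 - Num.sqrt (3:R) ^+ 2 by ring.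
  by rewrite h3 subrr.
have hP : 0 < pp R ^+ n by apply: exprn_gt0; apply: pp_gt0.
have hQ : qq R ^+ n = (pp R ^+ n)^-1.
  have hP0 : pp R ^+ n != 0 by rewrite gt_eqF.
  by apply: (mulfI hP0); rewrite divff // -exprMn hpq expr1n.
rewrite hQ /KK.
have -> : 2 * pp R - 4 = 2 * Num.sqrt 3 by rewrite /pp; ring.
move: hP hs; set P := pp R ^+ n; set s := Num.sqrt (3:R) => hP hs.
field.
rewrite !gt_eqF //; [lra|nra].
Qed.

Lemma sum_inv_roots (F : fieldType) (t : seq F) : (forall b, b \in t -> b != 0) ->
  (\prod_(b <- t) ('X - b%:P)).[0] != 0 /\
  \sum_(b <- t) b^-1 = - (\prod_(b <- t) ('X - b%:P))^`().[0] / (\prod_(b <- t) ('X - b%:P)).[0].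
Proof.
elim: t => [|c t IH] ht.
  by rewrite !big_nil hornerC oner_eq0 derivC horner0 oppr0 mul0r.
have [h1 h2] : _ := IH (fun b hb => ht b (@mem_behead _ (c :: t) b hb)).
have hc : c != 0 by apply: ht; rewrite inE eqxx.
rewrite !big_cons derivM derivXsubC mul1r !hornerE /=.
split; first by rewrite mulf_neq0 // oppr_eq0.
rewrite h2; move: h1; set a := (\prod_(j <- t) _).[0]; set b := (_^`()).[0] => h1.
field.
by rewrite h1 oppr_eq0 hc.
Qed.

Lemma char_poly_sim (F : fieldType) n (P A : 'M[F]_n) : P \in unitmx ->
  char_poly (invmx P *m A *m P) = char_poly A.
Proof.
move=> hP.
have e : char_poly_mx (invmx P *m A *m P) =
   map_mx polyC (invmx P) *m char_poly_mx A *m map_mx polyC P.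
  rewrite /char_poly_mx !map_mxM mulmxBr mulmxBl -!mulmxA.
  congr (_ - _).
  by rewrite mul_scalar_mx -scalemxAr -map_mxM mulVmx // map_mx1 scalemx1.
rewrite /char_poly e !det_mulmx mulrC mulrA -det_mulmx -map_mxM mulmxV //.
by rewrite map_mx1 det1 mul1r.
Qed.

Lemma main_cplx (R : realType) n (hn : (3 <= n)%N) :
  exists d : 'rV[R[i]]_n, d \is a realmx /\
    char_poly (map_mx (real_complex R) (L_S R n)) = \prod_(i < n) ('X - (d 0 i)%:P) /\
    \sum_(i < n) (d 0 i)^-1 = real_complex R (\tr (XX R n)).
Proof.
set M := map_mx (real_complex R) (L_S R n).
have Mh : M \is hermsymmx.
  apply: realsym_hermsym.
    apply/is_hermitianmxP; rewrite expr0 scale1r; apply/matrixP => i j.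
    by rewrite !mxE /= eq_sym (orbC (j.+1 == i :> nat)) (orbC ((j == 0 :> nat) && _)).
  apply/mxOverP => i j; rewrite mxE; apply/complex_realP.
  by exists (L_S R n i j).
have := hermitian_normalmx Mh => /orthomx_spectralP eM.
set P := spectralmx M in eM; set d := spectral_diag M in eM.
have Pu : P \in unitmx := spectral_unit M.
exists d; split; first exact: hermitian_spectral_diag_real.
have cpM : char_poly M = \prod_i ('X - (d 0 i)%:P).
  rewrite eM char_poly_sim // char_poly_trig ?diag_mx_is_trig //.
  by apply: eq_bigr => i _; rewrite mxE eqxx mulr1n.
split => //.
set XC := map_mx (real_complex R) (XX R n).
have MX : M *m XC = 1%:M by rewrite -map_mxM LX // map_mx1.
have Mu : M \in unitmx := (mulmx1_unit MX).1.
have dnz : forall i, d 0 i != 0.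
  move=> i.
  have : diag_mx d \in unitmx.
    have -> : diag_mx d = P *m M *m invmx P.
      by rewrite eM !mulmxA mulmxV // mul1mx -mulmxA mulmxV // mulmx1.
    by rewrite !unitmx_mul Pu Mu unitmx_inv Pu.
  rewrite unitmxE unitfE det_diag (bigD1 i) //= mulf_eq0 negb_or.
  by case/andP.
set E := diag_mx (\row_i (d 0 i)^-1).
have DE : diag_mx d *m E = 1%:M.
  apply/matrixP => i j; rewrite mul_diag_mx !mxE.
  case: (eqVneq i j) => [->|_]; last by rewrite !mulr0n mulr0.
  by rewrite !mulr1n divff.
have XCe : XC = invmx P *m E *m P.
  have h : M *m (invmx P *m E *m P) = 1%:M.
    rewrite eM !mulmxA -[invmx P *m diag_mx d *m P *m invmx P]mulmxA mulmxV //.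
    by rewrite mulmx1 -(mulmxA (invmx P)) DE mulmx1 mulVmx.
  have := congr1 (mulmx (invmx M)) h; have := congr1 (mulmx (invmx M)) MX.
  by rewrite !mulmxA mulVmx // !mul1mx => -> ->.
rewrite -trace_map_mx -/XC XCe mxtrace_mulC mulmxA mulmxV // mul1mx mxtrace_diag.
by apply: eq_bigr => i _; rewrite mxE.
Qed.

Theorem lemma3p2 (R : realType) (n : nat) (hn : (3 <= n)%N) :
  (exists s : seq R, char_poly (L_S R n) = \prod_(b <- s) ('X - b%:P)) /\
  (forall s : seq R, char_poly (L_S R n) = \prod_(b <- s) ('X - b%:P) ->
     (forall b, b \in s -> 0 < b) /\
     \sum_(b <- s) b^-1 =
       n%:R / (2 * Num.sqrt 3) *
       ((pp R ^+ n - qq R ^+ n) / (pp R ^+ n + qq R ^+ n + 2))).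
Proof.
have [d [dreal [cpM sumd]]] := @main_cplx R n hn.
have dRe : forall i, real_complex R (complex.Re (d 0 i)) = d 0 i.
  by move=> i; apply: RRe_real; move/mxOverP: dreal; apply.
set s0 := [seq complex.Re (d 0 i) | i <- index_enum 'I_n].
have hs0 : char_poly (L_S R n) = \prod_(b <- s0) ('X - b%:P).
  apply: (map_poly_inj (real_complex R)).
  rewrite map_char_poly cpM map_prod_XsubC big_map.
  by apply: eq_bigr => i _; congr (_ - _%:P); exact/esym/dRe.
have POS : forall s, char_poly (L_S R n) = \prod_(b <- s) ('X - b%:P) ->
    forall b, b \in s -> 0 < b.
  move=> s hs b hb; have : root (char_poly (L_S R n)) b by rewrite hs root_prod_XsubC.
  move/(@LS_eig_ge2 R n hn); lra.
split; first by exists s0.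
move=> s hs.
have pos := POS s hs.
split => //.
have [_ e1] := @sum_inv_roots _ s (fun b hb => lt0r_neq0 (pos b hb)).
rewrite -hs in e1.
have dnz : forall b, b \in [seq d 0 i | i <- index_enum 'I_n] -> b != 0.
  move=> b /mapP [i _ ->]; rewrite -dRe.
  have : 0 < complex.Re (d 0 i) by apply: (POS s0 hs0); apply: map_f; rewrite mem_index_enum.
  by move=> h; rewrite fmorph_eq0 lt0r_neq0.
have [_ e2] := @sum_inv_roots _ _ dnz.
rewrite !big_map in e2.
have {}e2 : real_complex R (\tr (XX R n)) =
    - (char_poly (map_mx (real_complex R) (L_S R n)))^`().[0] /
      (char_poly (map_mx (real_complex R) (L_S R n))).[0].
  by rewrite -sumd cpM; exact: e2.
rewrite -map_char_poly deriv_map -(rmorph0 (real_complex R)) !horner_map in e2.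
rewrite e1 -final_arith -trXX.
apply: (fmorph_inj (real_complex R)).
rewrite fmorph_div rmorphN; symmetry; exact: e2.
Qed.
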